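(* Let $X$ be a finite semi-permutation all of whose points have $x$-coordinates in $\{0,1,\dots,N-1\}$, let $0\le s<N$ be an integer, and let $X^s=\{((p.x+s)\bmod N,\;p.y): p\in X\}$ be the cyclic shift of $X$ by $s$ units to the right. Then $\mathrm{opt}(X^s)\ge \mathrm{opt}(X)-|X|$.
   Context: Points have integer coordinates. Two points $p,q$ are collinear if $p.x=q.x$ or $p.y=q.y$; otherwise $\square_{p,q}$ is the smallest closed axis-parallel rectangle containing both. A non-collinear pair $(p,q)$ is satisfied in $S$ if some $r\in S\setminus\{p,q\}$ lies in $\square_{p,q}$; $S$ is satisfied if all its non-collinear pairs are satisfied. $X$ is a semi-permutation if every horizontal line containing a point of $X$ contains exactly one. $\mathrm{opt}(X)$ is the minimum $|Y|$ over point sets $Y$ such that $X\cup Y$ is satisfied. *)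

(* Defs.v *)
From HB Require Import structures.
From mathcomp Require Import all_boot all_order all_algebra.
From mathcomp Require Import finmap.
Set Implicit Arguments. Unset Strict Implicit. Unset Printing Implicit Defensive.
Import Order.TTheory GRing.Theory Num.Theory.
Local Open Scope ring_scope.
Local Open Scope fset_scope.

Definition point := (int * int)%type.
Definition px (p : point) : int := p.1.
Definition py (p : point) : int := p.2.

Definition collinear (p q : point) : bool := (px p == px q) || (py p == py q).

Definition in_box (p q r : point) : bool :=
  (Num.min (px p) (px q) <= px r <= Num.max (px p) (px q)) &&
  (Num.min (py p) (py q) <= py r <= Num.max (py p) (py q)).

Definition pair_satisfied (S : {fset point}) (p q : point) : Prop :=
  exists r, [/\ r \in S, r != p, r != q & in_box p q r].

Definition satisfied (S : {fset point}) : Prop :=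
  forall p q, p \in S -> q \in S -> ~~ collinear p q -> pair_satisfied S p q.

Definition semi_permutation (X : {fset point}) : Prop :=
  forall p q, p \in X -> q \in X -> py p = py q -> p = q.

Definition is_opt (X : {fset point}) (k : nat) : Prop :=
  (exists Y : {fset point}, satisfied (X `|` Y) /\ #|` Y| = k) /\
  (forall Y : {fset point}, satisfied (X `|` Y) -> (k <= #|` Y|)%N).

Definition shift_pt (N s : nat) (p : point) : point :=
  (((px p + s%:Z) %% N%:Z)%Z, py p).

Definition cyc_shift (N s : nat) (X : {fset point}) : {fset point} :=
  [fset shift_pt N s p | p in X].

(* Main.v *)
Require Import Defs.
From HB Require Import structures.
From mathcomp Require Import all_boot all_order all_algebra.
From mathcomp Require Import finmap zify.
Import Order.TTheory GRing.Theory Num.Theory.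
Local Open Scope fset_scope.
Local Open Scope ring_scope.

Definition mapp (f g : int -> int) (S : {fset point}) : {fset point} :=
  [fset ((f p.1, g p.2) : point) | p in S].

Lemma meas1 (a1 a2 b1 b2 r1 r2 : int) :
  in_box (a1, a2) (b1, b2) (r1, r2) -> (r1, r2) != (a1, a2) ->
  (absz (b1 - r1) + absz (b2 - r2) < absz (b1 - a1) + absz (b2 - a2))%N.
Proof.
rewrite /in_box /px /py /= xpair_eqE => /andP[/andP[h1 h2] /andP[h3 h4]] /nandP[/eqP h|/eqP h]; lia.
Qed.

Lemma meas2 (a1 a2 b1 b2 r1 r2 : int) :
  in_box (a1, a2) (b1, b2) (r1, r2) -> (r1, r2) != (b1, b2) ->
  (absz (r1 - a1) + absz (r2 - a2) < absz (b1 - a1) + absz (b2 - a2))%N.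
Proof.
rewrite /in_box /px /py /= xpair_eqE => /andP[/andP[h1 h2] /andP[h3 h4]] /nandP[/eqP h|/eqP h]; lia.
Qed.

Lemma mono_between (f : int -> int) (a b r : int) :
  {homo f : x y / x <= y} ->
  Num.min a b <= r <= Num.max a b ->
  Num.min (f a) (f b) <= f r <= Num.max (f a) (f b).
Proof.
move=> hf /andP[h1 h2].
case: (lerP a b) => hab.
  have h3 : a <= r by lia.
  have h4 : r <= b by lia.
  have := hf _ _ h3; have := hf _ _ h4; lia.
have h3 : b <= r by lia.
have h4 : r <= a by lia.
have := hf _ _ h3; have := hf _ _ h4; lia.
Qed.

Lemma sat_map f g S : {homo f : a b / a <= b} -> {homo g : a b / a <= b} ->
  satisfied S -> satisfied (mapp f g S).
Proof.
move=> hf hg sS p2 q2 /imfsetP[[p1 p2'] pS ->] /imfsetP[[q1 q2'] qS ->] ncol.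
suff H : forall n (a b : point), a \in S -> b \in S -> f a.1 = f p1 -> g a.2 = g p2' ->
   f b.1 = f q1 -> g b.2 = g q2' ->
   (absz (b.1 - a.1) + absz (b.2 - a.2) < n)%N ->
   pair_satisfied (mapp f g S) (f (p1, p2').1, g (p1, p2').2) (f (q1, q2').1, g (q1, q2').2).
  by apply: (H _ (p1, p2') (q1, q2')) => //; exact: ltnSn.
elim=> [//|n IH] [a1 a2] [b1 b2] /= aS bS e1 e2 e3 e4 hn.
have ncab : ~~ collinear (a1, a2) (b1, b2).
  move: ncol; rewrite /collinear /px /py /= -e1 -e2 -e3 -e4.
  by apply: contra => /orP[/eqP->|/eqP->]; rewrite eqxx ?orbT.
have [[r1 r2] [rS rna rnb rbox]] := sS _ _ aS bS ncab.
case: (boolP ((f r1, g r2) == (f p1, g p2'))) => [/eqP [er1 er2]|hrp].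
  apply: (IH (r1, r2) (b1, b2)) => //=.
  have := meas1 _ _ _ _ _ _ rbox rna; lia.
case: (boolP ((f r1, g r2) == (f q1, g q2'))) => [/eqP [er1 er2]|hrq].
  apply: (IH (a1, a2) (r1, r2)) => //=.
  have := meas2 _ _ _ _ _ _ rbox rnb; lia.
exists (f r1, g r2); split => //=.
- by apply/imfsetP; exists (r1, r2).
- move: rbox; rewrite /in_box /px /py /= -e1 -e2 -e3 -e4 => /andP[h1 h2].
  by rewrite !mono_between.
Qed.

Definition fb (N s : nat) (x : int) : int :=
  if s%:Z <= x then x - s%:Z else x + N%:Z - s%:Z + 1.
Definition colset (c : int) (R : {fset int}) : {fset point} :=
  [fset ((c, y) : point) | y in R].

Lemma pair_sym S p q : pair_satisfied S p q -> pair_satisfied S q p.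
Proof.
move=> [r [h1 h2 h3 h4]]; exists r; split => //.
move: h4; rewrite /in_box => /andP[/andP[a b] /andP[c d]].
apply/andP; split; apply/andP; split; lia.
Qed.

Lemma col_sym p q : collinear p q = collinear q p.
Proof. by rewrite /collinear eq_sym [py p == _]eq_sym. Qed.

Lemma sat_block (N s : nat) S R : (s < N)%N -> satisfied S ->
  (forall a, a \in S -> 0 <= a.1 < N%:Z) -> (forall a, a \in S -> a.2 \in R) ->
  satisfied (mapp (fb N s) id S `|` colset (N%:Z - s%:Z) R).
Proof.
move=> sN sS hx hy.
set T := (X in satisfied X).
have colT : forall y, y \in R -> ((N%:Z - s%:Z, y) : point) \in T.
  by move=> y yR; rewrite inE; apply/orP; right; apply/imfsetP; exists y.
have imT : forall a, a \in S -> ((fb N s a.1, a.2) : point) \in T.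
  by move=> a aS; rewrite inE; apply/orP; left; apply/imfsetP; exists a.
have fbc : forall a, a \in S -> fb N s a.1 != N%:Z - s%:Z.
  move=> a /hx; rewrite /fb; case: ifP => _ h; apply/eqP; lia.
have ic : forall a y, a \in S -> ~~ collinear (fb N s a.1, a.2) (N%:Z - s%:Z, y) ->
    pair_satisfied T (fb N s a.1, a.2) (N%:Z - s%:Z, y).
  move=> [a1 a2] y aS nc; exists (N%:Z - s%:Z, a2); split.
  - exact: colT (hy _ aS).
  - rewrite xpair_eqE negb_and eq_sym (fbc _ aS) //.
  - move: nc; rewrite /collinear /px /py /= xpair_eqE negb_or => /andP[_ h]; rewrite negb_and h orbT //.
  - rewrite /in_box /px /py /=; apply/andP; split; apply/andP; split; lia.
move=> p q; rewrite inE => /orP[/imfsetP[a aS ->]|/imfsetP[y yR ->]];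
  rewrite inE => /orP[/imfsetP[b bS ->]|/imfsetP[z zR ->]] /= ncol.
-
  have := hx _ aS; have := hx _ bS; move: ncol aS bS.
  case: a => a1 a2; case: b => b1 b2 /= ncol aS bS hb ha.
  case: (boolP ((s%:Z <= a1) == (s%:Z <= b1))) => same.
  + have ncab : ~~ collinear (a1, a2) (b1, b2).
      move: ncol; rewrite /collinear /px /py /=; apply: contra => /orP[/eqP->|/eqP->];
      by rewrite eqxx ?orbT.
    have [[r1 r2] [rS rna rnb rbox]] := sS _ _ aS bS ncab.
    have hr := hx _ rS; rewrite /= in hr.
    exists (fb N s r1, r2); split.
    * exact: (imT _ rS).
    * move: rna; rewrite !xpair_eqE /fb; apply: contra => /andP[/eqP h ->];
      rewrite andbT; apply/eqP; move: h; case: (lerP s%:Z r1); case: (lerP s%:Z a1) => /= ? ?; lia.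
    * move: rnb; rewrite !xpair_eqE /fb; apply: contra => /andP[/eqP h ->];
      rewrite andbT; apply/eqP; move: h; case: (lerP s%:Z r1); case: (lerP s%:Z b1) => /= ? ?; lia.
    * move: rbox same; rewrite /in_box /px /py /fb /= => /andP[/andP[h1 h2] ->].
      rewrite andbT.
      case: (lerP s%:Z r1); case: (lerP s%:Z a1); case: (lerP s%:Z b1) => /= ? ? ? ?; lia.
  + exists (N%:Z - s%:Z, a2); split.
    * exact: colT (hy _ aS).
    * by rewrite xpair_eqE negb_and eq_sym (fbc _ aS).
    * move: ncol; rewrite /collinear /px /py /= xpair_eqE negb_or => /andP[_ h]; rewrite negb_and h orbT //.
    * move: same; rewrite /in_box /px /py /fb /=.
      case: (lerP s%:Z a1); case: (lerP s%:Z b1) => /= ? ? ?; apply/andP; split; apply/andP; split; lia.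
- exact: ic.
- apply: pair_sym; apply: ic => //; by rewrite col_sym.
- by move: ncol; rewrite /collinear /px /py /= eqxx.
Qed.

Definition lowr (l : seq int) (m y : int) : int :=
  foldr (fun r acc => if (r <= y) && (acc < r) then r else acc) m l.

Lemma low_ge l m y : m <= lowr l m y /\ forall r, r \in l -> r <= y -> r <= lowr l m y.
Proof.
elim: l => [|r0 l [IH1 IH2]] /=; first by split.
case: ifP => [/andP[h1 h2]|/negbT]; last rewrite negb_and => hn.
  split; first lia.
  move=> r; rewrite inE => /orP[/eqP->//|rl ry]; have := IH2 r rl ry; lia.
split => // r; rewrite inE => /orP[/eqP->|rl ry]; last exact: IH2.
move=> h; move: hn; rewrite h /= -leNgt //.
Qed.

Lemma low_cases l m y : lowr l m y = m \/ (lowr l m y \in l /\ lowr l m y <= y).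
Proof.
elim: l => [|r0 l IH] /=; first by left.
case: ifP => [/andP[h1 h2]|_]; first by right; rewrite inE eqxx.
case: IH => [->|[h1 h2]]; [by left| right; by rewrite inE h1 orbT].
Qed.

Lemma ex_min (l : seq int) : l != [::] -> exists2 m, m \in l & forall r, r \in l -> m <= r.
Proof.
elim: l => [//|r0 l IH] _.
case: l IH => [|r1 l] IH.
  by exists r0 => [|r]; rewrite ?inE ?eqxx // => /eqP->.
have [m ml hm] := IH isT.
case: (lerP r0 m) => h.
  exists r0; first by rewrite inE eqxx.
  move=> r; rewrite inE => /orP[/eqP->//|/hm]; lia.
exists m; first by rewrite inE ml orbT.
move=> r; rewrite inE => /orP[/eqP->|/hm] //; lia.
Qed.

Lemma ex_gy (R : {fset int}) : R != fset0 ->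
  exists g : int -> int, {homo g : a b / a <= b} /\ (forall r, r \in R -> g r = r)
     /\ (forall y, g y \in R).
Proof.
move=> Rn.
have [m mR hm] : exists2 m, m \in enum_fset R & forall r, r \in enum_fset R -> m <= r.
  apply: ex_min; apply: contra Rn => /eqP e; apply/eqP/fsetP => x.
  by rewrite inE -[x \in R]/(x \in enum_fset R) e.
exists (lowr (enum_fset R) m); split; [|split].
- move=> y1 y2 h.
  have [g1 g2] := low_ge (enum_fset R) m y2.
  case: (low_cases (enum_fset R) m y1) => [->//|[h1 h2]].
  apply: g2 => //; lia.
- move=> r rR.
  have [g1 g2] := low_ge (enum_fset R) m r.
  have := g2 r rR (lexx r).
  case: (low_cases (enum_fset R) m r) => [->|[h1 h2]].
    have := hm r rR; lia.
  lia.
- move=> y; case: (low_cases (enum_fset R) m y) => [->//|[h1 h2]] //.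
Qed.

Definition clampN (N : nat) (x : int) : int :=
  if x < 0 then 0 else if x < N%:Z then x else N%:Z - 1.
Definition hN (N s : nat) (x : int) : int :=
  if N%:Z - s%:Z + 1 <= x then x - 1 else x.

Lemma clamp_homo N : (0 < N)%N -> {homo clampN N : a b / a <= b}.
Proof.
move=> N0 a b h; rewrite /clampN.
case: (ltrP a 0); case: (ltrP b 0); case: (ltrP a N%:Z); case: (ltrP b N%:Z) => *; lia.
Qed.

Lemma hN_homo N s : {homo hN N s : a b / a <= b}.
Proof.
move=> a b h; rewrite /hN.
case: (lerP (N%:Z - s%:Z + 1) a); case: (lerP (N%:Z - s%:Z + 1) b) => *; lia.
Qed.

Lemma key (N s : nat) (x1 : int) : (s < N)%N -> 0 <= x1 < N%:Z ->
  hN N s (fb N s (clampN N ((x1 + s%:Z) %% N%:Z)%Z)) = x1.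
Proof.
move=> sN hx.
have -> : ((x1 + s%:Z) %% N%:Z)%Z = if x1 + s%:Z < N%:Z then x1 + s%:Z else x1 + s%:Z - N%:Z.
  case: (ltrP (x1 + s%:Z) N%:Z) => c.
    by rewrite modz_small //; apply/andP; split; lia.
  rewrite (_ : x1 + s%:Z = N%:Z + (x1 + s%:Z - N%:Z)); last lia.
  rewrite modzDl modz_small; first lia.
  apply/andP; split; lia.
rewrite /hN /fb /clampN.
case: (ltrP (x1 + s%:Z) N%:Z) => c1.
  case: (ltrP (x1 + s%:Z) 0) => c2; first lia.
  rewrite c1.
  case: (lerP s%:Z (x1 + s%:Z)) => c3; last lia.
  case: (lerP (N%:Z - s%:Z + 1) (x1 + s%:Z - s%:Z)) => c4; lia.
case: (ltrP (x1 + s%:Z - N%:Z) 0) => c2; first lia.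
case: (ltrP (x1 + s%:Z - N%:Z) N%:Z) => c5; last lia.
case: (lerP s%:Z (x1 + s%:Z - N%:Z)) => c3; first lia.
case: (lerP (N%:Z - s%:Z + 1) (x1 + s%:Z - N%:Z + N%:Z - s%:Z + 1)) => c4; lia.
Qed.

Lemma card_map f g (S : {fset point}) : (#|` mapp f g S| <= #|` S|)%N.
Proof. exact: leq_imfset_card. Qed.

Lemma cardU_le (A B : {fset point}) : (#|` A `|` B| <= #|` A| + #|` B|)%N.
Proof. have := cardfsUI A B; lia. Qed.

Lemma main_lemma (N s : nat) (X : {fset point}) (optX optXs : nat) :
  semi_permutation X ->
  (forall p, p \in X -> (0 <= px p)%R /\ (px p < N%:Z)%R) ->
  (s < N)%N ->
  is_opt X optX ->
  is_opt (cyc_shift N s X) optXs ->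
  (optX - #|` X| <= optXs)%N.
Proof.
move=> sp hX sN [_ optmin] [[Y' [satW cardY']] _].
case: (eqVneq X fset0) => [X0|Xn].
  have : (optX <= #|` (fset0 : {fset point})|)%N.
    by apply: optmin => p q; rewrite X0 !inE.
  by rewrite X0 cardfs0; lia.
set R := [fset py p | p in X].
have Rn : R != fset0.
  case/fset0Pn: Xn => x xX; apply/fset0Pn; exists (py x); by apply/imfsetP; exists x.
have [gy [hgy [gyfix gyR]]] := ex_gy _ Rn.
set W := cyc_shift N s X `|` Y'.
set W1 := mapp (clampN N) gy W.
have s1 : satisfied W1 := sat_map _ _ _ (@clamp_homo N (leq_ltn_trans (leq0n s) sN)) hgy satW.
set T := mapp (fb N s) id W1 `|` colset (N%:Z - s%:Z) R.
have s2 : satisfied T.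
  apply: sat_block => //.
    move=> a /imfsetP[b _ ->] /=; rewrite /clampN.
    case: (ltrP b.1 0) => c1; first lia.
    case: (ltrP b.1 N%:Z) => c2; first by rewrite c1 c2.
    apply/andP; split; lia.
  by move=> a /imfsetP[b _ ->] /=.
set Z := mapp (hN N s) id T.
have s3 : satisfied Z := sat_map _ _ _ (@hN_homo N s) (fun a b (e : a <= b) => e) s2.
have XZ : X `<=` Z.
  apply/fsubsetP => -[x1 x2] xX.
  have [h0 h1] := hX _ xX; rewrite /px /= in h0 h1.
  apply/imfsetP; exists (fb N s (clampN N ((x1 + s%:Z) %% N%:Z)%Z), x2).
    rewrite inE; apply/orP; left; apply/imfsetP.
    exists (clampN N ((x1 + s%:Z) %% N%:Z)%Z, x2) => //.
    apply/imfsetP; exists (((x1 + s%:Z) %% N%:Z)%Z, x2).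
      rewrite inE; apply/orP; left; apply/imfsetP; exists (x1, x2) => //.
    rewrite /= gyfix //; apply/imfsetP; by exists (x1, x2).
  by rewrite /= key // h0 h1.
have c1 : (#|` Z| <= #|` T|)%N := card_map _ _ _.
have c2 : (#|` T| <= #|` W1| + #|` R|)%N.
  apply: leq_trans (cardU_le _ _) _; apply: leq_add; first exact: card_map.
  exact: leq_imfset_card.
have c3 : (#|` W1| <= #|` W|)%N := card_map _ _ _.
have c4 : (#|` W| <= #|` X| + #|` Y'|)%N.
  apply: leq_trans (cardU_le _ _) _; apply: leq_add => //; exact: leq_imfset_card.
have c5 : (#|` R| <= #|` X|)%N by exact: leq_imfset_card.
have := optmin (Z `\` X).
have -> : X `|` Z `\` X = Z.
  apply/fsetP => x; rewrite !inE; case: (boolP (x \in X)) => //= xX.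
  by rewrite (fsubsetP XZ).
rewrite cardfsDS // => /(_ s3); lia.
Qed.

Local Close Scope ring_scope.

Theorem claim4p4 (N s : nat) (X : {fset point}) (optX optXs : nat) :
  semi_permutation X ->
  (forall p, p \in X -> (0 <= px p)%R /\ (px p < N%:Z)%R) ->
  (s < N)%N ->
  is_opt X optX ->
  is_opt (cyc_shift N s X) optXs ->
  (optX - #|` X| <= optXs)%N.
Proof. exact: main_lemma. Qed.
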